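(* For all integers $n\ge m\ge k+1\ge 3$, $\Gamma_{\times k,t}(K_n\,\Box\,K_m)\ge kn$.
   Context: A set $S\subseteq V(G)$ is a $k$-tuple total dominating set ($k$TDS) of a graph $G$ with $\delta(G)\ge k$ if $|N_G(x)\cap S|\ge k$ for every $x\in V(G)$. The upper $k$-tuple total domination number $\Gamma_{\times k,t}(G)$ is the maximum cardinality of a minimal (with respect to inclusion) $k$TDS of $G$. The Cartesian product $G\,\Box\,H$ has vertex set $V(G)\times V(H)$, with $(g_1,h_1)\sim(g_2,h_2)$ iff either $g_1=g_2$ and $h_1h_2\in E(H)$, or $h_1=h_2$ and $g_1g_2\in E(G)$. *)

(* Defs.v *)
From mathcomp Require Import all_boot.
Set Implicit Arguments. Unset Strict Implicit. Unset Printing Implicit Defensive.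

(* Simple graphs are given by an adjacency relation [e : rel T] on a finType T
   (symmetric and irreflexive for the graphs used here). *)

Definition nbhd (T : finType) (e : rel T) (x : T) : {set T} := [set y | e x y].

Definition is_kTDS (T : finType) (e : rel T) (k : nat) (S : {set T}) : bool :=
  [forall x, k <= #|nbhd e x :&: S|].

Definition is_min_kTDS (T : finType) (e : rel T) (k : nat) (S : {set T}) : bool :=
  is_kTDS e k S && [forall S' : {set T}, (S' \proper S) ==> ~~ is_kTDS e k S'].

Definition upper_ktuple_tdom (T : finType) (e : rel T) (k : nat) : nat :=
  \max_(S : {set T} | is_min_kTDS e k S) #|S|.

Definition complete_rel (n : nat) : rel 'I_n := fun x y => x != y.

Definition cart_rel (A B : finType) (eA : rel A) (eB : rel B) : rel (A * B) :=
  fun u v => ((u.1 == v.1) && eB u.2 v.2) || ((u.2 == v.2) && eA u.1 v.1).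

(* Main.v *)
Require Import Defs.
From mathcomp Require Import all_boot.
From mathcomp Require Import zify.
Set Implicit Arguments. Unset Strict Implicit. Unset Printing Implicit Defensive.

Lemma cardA (m k : nat) : k <= m -> #|[set j : 'I_m | j < k]| = k.
Proof.
move=> km.
have -> : [set j : 'I_m | j < k] = widen_ord km @: [set: 'I_k].
  apply/setP => j; rewrite inE; apply/idP/imsetP.
    by move=> H; exists (Ordinal H) => //; apply: val_inj.
  by case=> i _ ->; rewrite /= ltn_ord.
rewrite card_imset ?cardsT ?card_ord //.
by move=> x y /(congr1 val) /= H; apply: val_inj.
Qed.

Theorem mainTheorem8 (n m k : nat) :
  2 <= k -> k + 1 <= m -> m <= n ->
  k * n <= upper_ktuple_tdom (cart_rel (@complete_rel n) (@complete_rel m)) k.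
Proof.
move=> hk hkm hmn.
set e := cart_rel (@complete_rel n) (@complete_rel m).
set A := [set j : 'I_m | j < k].
have km : k <= m by lia.
  have hkm2 : k < m by lia.
have cA : #|A| = k by exact: cardA.
set S : {set 'I_n * 'I_m} := setX [set: 'I_n] A.
have cS : #|S| = k * n by rewrite cardsX cardsT card_ord cA mulnC.
have inS : forall u : 'I_n * 'I_m, (u \in S) = (u.2 < k).
  by move=> [a b]; rewrite !inE.
have minS : is_min_kTDS e k S.
  apply/andP; split.
    apply/forallP => -[a b].
    case: (ltnP b k) => hb.
      have sub : setX [set~ a] [set b] \subset nbhd e (a, b) :&: S.
        apply/subsetP => -[i j]; rewrite !inE /e /cart_rel /complete_rel /=.
        move=> /andP [ia /eqP ->]; rewrite hb eqxx /=; by rewrite andbF andbT eq_sym.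
      apply: leq_trans (subset_leq_card sub).
      by rewrite cardsX cardsC1 cards1 card_ord muln1; lia.
    have sub : setX [set a] A \subset nbhd e (a, b) :&: S.
      apply/subsetP => -[i j]; rewrite !inE /e /cart_rel /complete_rel /=.
      move=> /andP [/eqP -> hj]; rewrite eqxx hj /= andbT.
      by apply/orP; left; apply/eqP => E; move: hj; rewrite -E; lia.
    by apply: leq_trans (subset_leq_card sub); rewrite cardsX cards1 cA mul1n.
  apply/forallP => S'; apply/implyP => /properP [sub [[a j0] xS xS']].
  apply/negP => /forallP /(_ (a, Ordinal hkm2)).
  have sub2 : nbhd e (a, Ordinal hkm2) :&: S' \subset setX [set a] A :\ (a, j0).
    apply/subsetP => -[i j]; rewrite !inE /e /cart_rel /complete_rel /=.
    move=> /andP [H iS'].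
    have : (i, j) \in S by apply: (subsetP sub).
    rewrite inS /= => jk.
    have hjk : (Ordinal hkm2 == j) = false.
      by apply/negbTE/eqP => E; move: jk; rewrite -E /=; lia.
    move: H; rewrite hjk andFb orbF => /andP [/eqP ai _]; rewrite -ai in iS' *.
    have ne : (a, j) != (a, j0) by apply/eqP => E; move: xS'; rewrite -E iS'.
    by rewrite ne eqxx jk.
  move=> hle; move: (leq_trans hle (subset_leq_card sub2)).
  have : (a, j0) \in setX [set a] A by move: xS; rewrite !inE /= eqxx.
  move=> xin; have h := cardsD1 (a, j0) (setX [set a] A); rewrite xin in h.
  have h2 : #|setX [set a] A| = k by rewrite cardsX cards1 cA mul1n.
  rewrite h2 in h. lia.
rewrite /upper_ktuple_tdom -cS.
exact: (@leq_bigmax_cond _ (fun S0 : {set 'I_n * 'I_m} => is_min_kTDS e k S0) (fun S0 : {set 'I_n * 'I_m} => #|S0|) S minS).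
Qed.
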